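(* Let $n > m \geq 2$ be integers, let $X$ be a random variable taking values in $\mathcal{X}=\{x_1,\ldots,x_n\}$ with $P\{X=x_i\}=p_i$, where $\mathbf{p}=(p_1,\ldots,p_n)$ satisfies $p_1\geq p_2\geq\cdots\geq p_n\geq 0$ and $\sum_i p_i=1$. Then $$\max_{f\in\mathcal{F}_m} H(f(X)) \in \big[\,H(R_m(\mathbf{p}))-\alpha,\; H(R_m(\mathbf{p}))\,\big], \qquad \text{where } \alpha = 1-\frac{1+\ln(\ln 2)}{\ln 2}<0.08608,$$ and $$\min_{f\in\mathcal{F}_m} H(f(X)) = H(Q_m(\mathbf{p})).$$
   Context: $H$ denotes Shannon entropy in bits: for a probability vector $\mathbf{a}=(a_1,\ldots,a_t)$, $H(\mathbf{a})=-\sum_i a_i\log_2 a_i$ with $0\log 0=0$; $\ln$ is the natural logarithm. $\mathcal{Y}_m=\{y_1,\ldots,y_m\}$ is a set of $m$ elements and $\mathcal{F}_m$ is the set of all surjective functions $f:\mathcal{X}\to\mathcal{Y}_m$. Definition of $R_m(\mathbf{p})=(r_1,\ldots,r_m)$ for $\mathbf{p}$ sorted nonincreasingly: if $p_1<1/m$, then $R_m(\mathbf{p})=(1/m,\ldots,1/m)$. If $p_1\geq 1/m$, let $i^*$ be the maximum index $i\in\{1,\ldots,m-1\}$ such that $p_i\geq \frac{\sum_{j=i+1}^n p_j}{m-i}$. Then set $r_i=p_i$ for $i=1,\ldots,i^*$ and $r_i=\frac{\sum_{j=i^*+1}^n p_j}{m-i^*}$ for $i=i^*+1,\ldots,m$.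 Definition of $Q_m(\mathbf{p})=(q_1,\ldots,q_m)$: $q_1=\sum_{k=1}^{n-m+1}p_k$ and $q_i=p_{n-m+i}$ for $i=2,\ldots,m$. *)

(* Defs.v *)
From Stdlib Require Import Reals Lra Arith.
Open Scope R_scope.

(* Indices are 0-based: p i is the paper's p_{i+1}, for i < n. *)

Fixpoint rsum (t : nat) (g : nat -> R) : R :=
  match t with
  | O => 0
  | S k => rsum k g + g k
  end.

Definition plog2p (x : R) : R :=
  if Rle_dec x 0 then 0 else x * (ln x / ln 2).

Definition entropy (t : nat) (a : nat -> R) : R :=
  - rsum t (fun i => plog2p (a i)).

(* f : X -> Y_m encoded on indices: f i < m for i < n *)
Definition maps_into (n m : nat) (f : nat -> nat) : Prop :=
  forall i, (i < n)%nat -> (f i < m)%nat.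

Definition surj_onto (n m : nat) (f : nat -> nat) : Prop :=
  maps_into n m f /\ forall j, (j < m)%nat -> exists i, (i < n)%nat /\ f i = j.

(* distribution of f(X): P{f(X) = y_{j+1}} *)
Definition pushforward (n : nat) (f : nat -> nat) (p : nat -> R) (j : nat) : R :=
  rsum n (fun i => if Nat.eqb (f i) j then p i else 0).

(* sum_{j = k}^{n-1} p j  (0-based);  in 1-based notation sum_{j=k+1}^n p_j *)
Definition tail (n : nat) (p : nat -> R) (k : nat) : R :=
  rsum n (fun j => if Nat.leb k j then p j else 0).

(* condition for 1-based index i:  p_i >= (sum_{j=i+1}^n p_j) / (m - i) *)
Definition istar_cond (n m : nat) (p : nat -> R) (i : nat) : bool :=
  if Rle_dec (tail n p i / INR (m - i)) (p (i - 1)%nat) then true else false.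

(* largest 1-based i in {1,...,k} satisfying the condition (0 if none) *)
Fixpoint istar_aux (n m : nat) (p : nat -> R) (k : nat) : nat :=
  match k with
  | O => O
  | S k' => if istar_cond n m p (S k') then S k' else istar_aux n m p k'
  end.

Definition istar (n m : nat) (p : nat -> R) : nat := istar_aux n m p (m - 1).

Definition Rm (n m : nat) (p : nat -> R) (r : nat) : R :=
  if Rlt_dec (p O) (1 / INR m) then 1 / INR m
  else let i := istar n m p in
       if Nat.ltb r i then p r else tail n p i / INR (m - i).

Definition Qm (n m : nat) (p : nat -> R) (r : nat) : R :=
  match r with
  | O => rsum (n - m + 1) p
  | _ => p (n - m + r)%nat
  end.

Definition alpha : R := 1 - (1 + ln (ln 2)) / ln 2.

(* Main.v *)
Require Import Defs.
From Stdlib Require Import Reals Lra Lia Arith List Factorial Classical.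
Open Scope R_scope.

Lemma rsum_ext t g g' : (forall i, (i < t)%nat -> g i = g' i) -> rsum t g = rsum t g'.
Proof. induction t; intros H; simpl; auto. rewrite IHt, H; auto. Qed.

Lemma rsum_le t g g' : (forall i, (i < t)%nat -> g i <= g' i) -> rsum t g <= rsum t g'.
Proof. induction t; intros H; simpl. lra. pose proof (H t ltac:(lia)). pose proof (IHt ltac:(auto)). lra. Qed.

Lemma rsum_nonneg t g : (forall i, (i < t)%nat -> 0 <= g i) -> 0 <= rsum t g.
Proof. intros. replace 0 with (rsum t (fun _ => 0)). apply rsum_le; auto.
  induction t; simpl; auto. rewrite IHt; auto. lra. Qed.

Lemma rsum_plus t g h : rsum t (fun i => g i + h i) = rsum t g + rsum t h.
Proof. induction t; simpl; lra. Qed.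

Lemma rsum_minus t g h : rsum t (fun i => g i - h i) = rsum t g - rsum t h.
Proof. induction t; simpl; lra. Qed.

Lemma rsum_scal t c g : rsum t (fun i => c * g i) = c * rsum t g.
Proof. induction t; simpl. ring. rewrite IHt; ring. Qed.

Lemma rsum_const t c : rsum t (fun _ => c) = INR t * c.
Proof. induction t; cbn [rsum]. simpl; ring. rewrite IHt. rewrite S_INR. ring. Qed.

Lemma rsum_split a b g : rsum (a + b) g = rsum a g + rsum b (fun i => g (a + i)%nat).
Proof. induction b; simpl. rewrite Nat.add_0_r; ring. rewrite Nat.add_succ_r. simpl. rewrite IHb. ring. Qed.

Lemma rsum_swap a b (F : nat -> nat -> R) :
  rsum a (fun j => rsum b (fun i => F i j)) = rsum b (fun i => rsum a (fun j => F i j)).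
Proof.
  induction a; simpl.
  - induction b; simpl; auto. rewrite <- IHb; ring.
  - rewrite IHa. rewrite <- rsum_plus. reflexivity.
Qed.

Lemma rsum_pick t a h :
  rsum t (fun i => if Nat.eqb a i then h i else 0) = if Nat.ltb a t then h a else 0.
Proof.
  induction t. { cbn [rsum]. destruct (Nat.ltb a 0) eqn:E; [apply Nat.ltb_lt in E; lia | reflexivity]. }
  cbn [rsum]. rewrite IHt. destruct (Nat.eqb a t) eqn:E1.
  - apply Nat.eqb_eq in E1; subst. replace (Nat.ltb t t) with false by (symmetry; apply Nat.ltb_ge; lia).
    replace (Nat.ltb t (S t)) with true by (symmetry; apply Nat.ltb_lt; lia). ring.
  - apply Nat.eqb_neq in E1.
    destruct (Nat.ltb a t) eqn:E2; destruct (Nat.ltb a (S t)) eqn:E3; try ring;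
      apply Nat.ltb_lt in E2 || apply Nat.ltb_ge in E2;
      apply Nat.ltb_lt in E3 || apply Nat.ltb_ge in E3; lia.
Qed.

Lemma rsum_pick' t a h :
  rsum t (fun i => if Nat.eqb i a then h i else 0) = if Nat.ltb a t then h a else 0.
Proof. rewrite <- rsum_pick. apply rsum_ext. intros. rewrite Nat.eqb_sym. auto. Qed.

Lemma rsum_unique t (P : nat -> bool) x : 0 <= x ->
  (forall j j', (j < t)%nat -> (j' < t)%nat -> P j = true -> P j' = true -> j = j') ->
  rsum t (fun j => if P j then x else 0) <= x.
Proof.
  induction t; intros Hx HU; simpl. lra.
  destruct (P t) eqn:E.
  - replace (rsum t (fun j => if P j then x else 0)) with (rsum t (fun _ => 0)).
    + rewrite rsum_const. lra.
    + apply rsum_ext. intros i Hi. destruct (P i) eqn:E'; auto.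
      specialize (HU i t ltac:(lia) ltac:(lia) E' E). lia.
  - rewrite Rplus_0_r. apply IHt; auto. all: intros; apply HU; auto; lia.
Qed.

Lemma rsum_term_le t g i : (forall j, (j < t)%nat -> 0 <= g j) -> (i < t)%nat -> g i <= rsum t g.
Proof.
  induction t; intros H Hi. lia. simpl.
  destruct (Nat.eq_dec i t). subst. pose proof (rsum_nonneg t g ltac:(auto)). lra.
  pose proof (IHt ltac:(auto) ltac:(lia)). pose proof (H t ltac:(lia)). lra.
Qed.

Lemma rsum_pos_ex t g : 0 < rsum t g -> exists i, (i < t)%nat /\ 0 < g i.
Proof.
  induction t; simpl; intros H. lra.
  destruct (Rlt_dec 0 (g t)). exists t; split; auto.
  destruct IHt as [i [Hi Hg]]. lra. exists i; split; auto.
Qed.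

Lemma rsum_lt_ex t g c : (1 <= t)%nat -> INR t * c <= rsum t g -> exists i, (i < t)%nat /\ c <= g i.
Proof.
  induction t; intros Ht H. lia. cbn [rsum] in H. rewrite S_INR in H.
  destruct (Rle_dec c (g t)). exists t; split; auto.
  destruct t. cbn [rsum INR] in H. lra.
  destruct IHt as [i [Hi Hg]]. lia. lra. exists i; split; auto.
Qed.

Lemma sorted_le n p : (forall i, (S i < n)%nat -> p (S i) <= p i) ->
  forall i j, (i <= j)%nat -> (j < n)%nat -> p j <= p i.
Proof.
  intros H i j Hij. induction Hij; intros. lra.
  pose proof (H m ltac:(lia)). pose proof (IHHij ltac:(lia)). lra.
Qed.

Definition phi (x : R) : R := if Rle_dec x 0 then 0 else - (x * ln x).

Lemma ln2_pos : 0 < ln 2.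
Proof. pose proof ln_lt_2. lra. Qed.

Lemma entropy_phi t a : entropy t a = rsum t (fun i => phi (a i)) / ln 2.
Proof.
  unfold entropy. pose proof ln2_pos.
  replace (rsum t (fun i => plog2p (a i))) with (rsum t (fun i => (-/ ln 2) * phi (a i))).
  - rewrite rsum_scal. field. lra.
  - apply rsum_ext. intros. unfold plog2p, phi. destruct (Rle_dec (a i) 0). ring. field. lra.
Qed.

Lemma phi_pos x : 0 < x -> phi x = - (x * ln x).
Proof. intros. unfold phi. destruct (Rle_dec x 0); lra. Qed.
Lemma phi_0 x : x <= 0 -> phi x = 0.
Proof. intros. unfold phi. destruct (Rle_dec x 0); lra. Qed.

Lemma ln_le x y : 0 < x -> x <= y -> ln x <= ln y.
Proof. intros. destruct H0. left; apply ln_increasing; auto. subst; lra. Qed.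

Lemma ln_le_sub1 z : 0 < z -> ln z <= z - 1.
Proof.
  intros Hz. pose proof (exp_ineq1_le (z - 1)).
  rewrite <- (ln_exp (z - 1)). apply ln_le; auto. lra.
Qed.

Lemma gibbs_term q t : 0 <= q -> 0 <= t -> (0 < q -> 0 < t) -> phi q <= - q * ln t + t - q.
Proof.
  intros Hq Ht Hqt. destruct (Rle_dec q 0).
  - assert (q = 0) by lra. subst. rewrite phi_0 by lra. lra.
  - assert (0 < q) by lra. specialize (Hqt H). rewrite phi_pos by auto.
    pose proof (ln_le_sub1 (t / q) ltac:(apply Rdiv_lt_0_compat; auto)).
    unfold Rdiv in H0. rewrite ln_mult, ln_Rinv in H0 by (auto; apply Rinv_0_lt_compat; auto).
    assert (q * (ln t - ln q) <= q * (t * / q - 1)) by (apply Rmult_le_compat_l; lra).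
    replace (q * (t * / q - 1)) with (t - q) in H1 by (field; lra). lra.
Qed.

Lemma push_total n m f p : maps_into n m f -> rsum m (pushforward n f p) = rsum n p.
Proof.
  intros Hf. unfold pushforward. rewrite rsum_swap. apply rsum_ext. intros i Hi.
  rewrite rsum_pick. replace (Nat.ltb (f i) m) with true; auto. symmetry; apply Nat.ltb_lt; auto.
Qed.

Lemma push_weighted n m f p w : maps_into n m f ->
  rsum m (fun j => pushforward n f p j * w j) = rsum n (fun i => p i * w (f i)).
Proof.
  intros Hf. unfold pushforward.
  transitivity (rsum m (fun j => rsum n (fun i => if Nat.eqb (f i) j then p i * w j else 0))).
  - apply rsum_ext. intros j Hj. rewrite Rmult_comm, <- rsum_scal. apply rsum_ext. intros.
    destruct (Nat.eqb (f i) j); ring.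
  - rewrite rsum_swap. apply rsum_ext. intros i Hi.
    rewrite (rsum_pick m (f i) (fun j => p i * w j)).
    replace (Nat.ltb (f i) m) with true; auto. symmetry; apply Nat.ltb_lt; auto.
Qed.

Lemma push_nonneg n f p j : (forall i, (i < n)%nat -> 0 <= p i) -> 0 <= pushforward n f p j.
Proof. intros. apply rsum_nonneg. intros. destruct (Nat.eqb (f i) j); auto; lra. Qed.

Lemma push_ge n f p j i : (forall i, (i < n)%nat -> 0 <= p i) -> (i < n)%nat -> f i = j ->
  p i <= pushforward n f p j.
Proof.
  intros Hp Hi Hf. unfold pushforward.
  pose proof (rsum_term_le n (fun i => if Nat.eqb (f i) j then p i else 0) i).
  simpl in H. rewrite Hf, Nat.eqb_refl in H. apply H; auto.
  intros. destruct (Nat.eqb (f j0) j); auto; lra.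
Qed.

Lemma push_S t f p j : pushforward (S t) f p j = pushforward t f p j + (if Nat.eqb (f t) j then p t else 0).
Proof. reflexivity. Qed.

Fixpoint ffirst (f : nat -> nat) (j : nat) (n : nat) : nat :=
  match n with
  | O => O
  | S n' => let r := ffirst f j n' in
            if Nat.ltb r n' then r else if Nat.eqb (f n') j then n' else S n'
  end.

Lemma ffirst_le f j n : (ffirst f j n <= n)%nat.
Proof.
  induction n; simpl. lia.
  destruct (Nat.ltb (ffirst f j n) n) eqn:E. apply Nat.ltb_lt in E; lia.
  destruct (Nat.eqb (f n) j); lia.
Qed.

Lemma ffirst_spec f j n : (ffirst f j n < n)%nat -> f (ffirst f j n) = j.
Proof.
  induction n; simpl; intros H. lia.
  destruct (Nat.ltb (ffirst f j n) n) eqn:E. apply Nat.ltb_lt in E; auto.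
  destruct (Nat.eqb (f n) j) eqn:E2. apply Nat.eqb_eq; auto. lia.
Qed.

Lemma ffirst_min f j n i : (i < n)%nat -> f i = j -> (ffirst f j n <= i)%nat.
Proof.
  induction n; simpl; intros Hi Hf. lia.
  pose proof (ffirst_le f j n).
  destruct (Nat.ltb (ffirst f j n) n) eqn:E.
  - apply Nat.ltb_lt in E. destruct (Nat.eq_dec i n). lia. apply IHn; auto; lia.
  - apply Nat.ltb_ge in E. destruct (Nat.eq_dec i n).
    + subst. rewrite Nat.eqb_refl. lia.
    + pose proof (IHn ltac:(lia) Hf). lia.
Qed.

Lemma upper_gen n m p f k c :
  (k < m)%nat -> (m < n)%nat -> (forall i, (i < n)%nat -> 0 <= p i) ->
  (forall i, (S i < n)%nat -> p (S i) <= p i) -> surj_onto n m f -> 0 <= c ->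
  (forall i, (i < k)%nat -> c <= p i) -> rsum k p + INR (m - k) * c = 1 -> rsum n p = 1 ->
  rsum m (fun j => phi (pushforward n f p j)) <= rsum k (fun i => phi (p i)) + INR (m - k) * phi c.
Proof.
  intros Hkm Hmn Hp Hs [Hmap Hsurj] Hc Hcp Hsum Hn.
  set (g := fun j => ffirst f j n).
  assert (Hg1 : forall j, (j < m)%nat -> (g j < n)%nat /\ f (g j) = j).
  { intros j Hj. destruct (Hsurj j Hj) as [i [Hi Hfi]].
    pose proof (ffirst_min f j n i Hi Hfi). split. unfold g; lia. apply ffirst_spec. unfold g in *; lia. }
  assert (Hg2 : forall i, (i < n)%nat -> (g (f i) <= i)%nat).
  { intros. apply ffirst_min; auto. }
  set (t := fun j => if Nat.ltb (g j) k then p (g j) else c).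
  assert (Htc : forall j, (j < m)%nat -> c <= t j).
  { intros j Hj. unfold t. destruct (Nat.ltb (g j) k) eqn:E. apply Nat.ltb_lt in E; auto. lra. }
  assert (Ht0 : forall j, (j < m)%nat -> 0 <= t j). { intros. pose proof (Htc j H). lra. }
  assert (Htp : forall i, (i < k)%nat -> p i <= t (f i)).
  { intros i Hi. pose proof (Hg2 i ltac:(lia)). unfold t.
    replace (Nat.ltb (g (f i)) k) with true by (symmetry; apply Nat.ltb_lt; lia).
    apply (sorted_le n p Hs); lia. }
  assert (Hsplit : rsum n p = rsum k p + rsum (n - k) (fun d => p (k + d)%nat)).
  { replace n with (k + (n - k))%nat at 1 by lia. apply rsum_split. }
  assert (Htail : rsum (n - k) (fun d => p (k + d)%nat) = INR (m - k) * c) by lra.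
  assert (Hcpos : forall i, (k <= i)%nat -> (i < n)%nat -> 0 < p i -> 0 < c).
  { intros i Hki Hin Hpi. destruct Hc as [Hc|Hc]; auto. exfalso.
    pose proof (rsum_term_le (n - k) (fun d => p (k + d)%nat) (i - k)%nat).
    simpl in H. replace (k + (i - k))%nat with i in H by lia.
    rewrite Htail, <- Hc, Rmult_0_r in H. specialize (H ltac:(intros; apply Hp; lia) ltac:(lia)). lra. }
  set (q := pushforward n f p).
  assert (Hq0 : forall j, 0 <= q j) by (intros; apply push_nonneg; auto).
  assert (Hqt : forall j, (j < m)%nat -> 0 < q j -> 0 < t j).
  { intros j Hj Hqj. destruct (rsum_pos_ex _ _ Hqj) as [i [Hi Hpi]].
    destruct (Nat.eqb (f i) j) eqn:E; [|lra]. apply Nat.eqb_eq in E. subst j.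
    destruct (Nat.ltb i k) eqn:Ek.
    - apply Nat.ltb_lt in Ek. pose proof (Htp i Ek). lra.
    - apply Nat.ltb_ge in Ek. pose proof (Hcpos i Ek Hi Hpi). pose proof (Htc (f i) Hj). lra. }
  assert (S1 : rsum m (fun j => phi (q j)) <=
               rsum m (fun j => q j * (- ln (t j))) + rsum m t - rsum m q).
  { rewrite <- rsum_plus, <- rsum_minus. apply rsum_le. intros j Hj.
    pose proof (gibbs_term (q j) (t j) (Hq0 j) (Ht0 j Hj) (Hqt j Hj)). lra. }
  assert (Hqsum : rsum m q = 1) by (unfold q; rewrite push_total; auto).
  assert (S2 : rsum m t <= 1).
  { assert (E1 : rsum m t = INR m * c +
       rsum m (fun j => rsum k (fun i => if Nat.eqb (g j) i then p i - c else 0))).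
    { rewrite <- rsum_const, <- rsum_plus. apply rsum_ext. intros j Hj.
      rewrite (rsum_pick k (g j) (fun i => p i - c)). unfold t.
      destruct (Nat.ltb (g j) k); ring. }
    rewrite rsum_swap in E1.
    assert (E2 : rsum k (fun i => rsum m (fun j => if Nat.eqb (g j) i then p i - c else 0))
                 <= rsum k (fun i => p i - c)).
    { apply rsum_le. intros i Hi. apply rsum_unique. pose proof (Hcp i Hi); lra.
      intros j j' Hj Hj' E E'. apply Nat.eqb_eq in E, E'.
      destruct (Hg1 j Hj) as [_ F1]. destruct (Hg1 j' Hj') as [_ F2]. congruence. }
    rewrite rsum_minus, rsum_const in E2. rewrite minus_INR in Hsum by lia. lra. }
  assert (S3 : rsum m (fun j => q j * (- ln (t j))) = rsum n (fun i => p i * (- ln (t (f i))))).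
  { unfold q. apply push_weighted; auto. }
  assert (S4 : rsum n (fun i => p i * (- ln (t (f i)))) <=
               rsum n (fun i => if Nat.ltb i k then phi (p i) else p i * (- ln c))).
  { apply rsum_le. intros i Hi. destruct (Rle_dec (p i) 0).
    - assert (p i = 0) by (pose proof (Hp i Hi); lra). rewrite H.
      destruct (Nat.ltb i k); [rewrite phi_0|]; lra.
    - assert (Hpi : 0 < p i) by lra. destruct (Nat.ltb i k) eqn:Ek.
      + apply Nat.ltb_lt in Ek. rewrite phi_pos by auto. pose proof (Htp i Ek).
        pose proof (ln_le (p i) (t (f i)) Hpi H). nra.
      + apply Nat.ltb_ge in Ek. pose proof (Hcpos i Ek Hi Hpi). pose proof (Htc (f i) (Hmap i Hi)).
        pose proof (ln_le c (t (f i)) H H0). nra. }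
  assert (S5 : rsum n (fun i => if Nat.ltb i k then phi (p i) else p i * (- ln c)) =
               rsum k (fun i => phi (p i)) + INR (m - k) * c * (- ln c)).
  { replace n with (k + (n - k))%nat at 1 by lia. rewrite rsum_split. f_equal.
    - apply rsum_ext. intros. replace (Nat.ltb i k) with true; auto. symmetry; apply Nat.ltb_lt; auto.
    - rewrite <- Htail. rewrite Rmult_comm, <- rsum_scal. apply rsum_ext. intros.
      replace (Nat.ltb (k + i) k) with false by (symmetry; apply Nat.ltb_ge; lia). ring. }
  assert (S6 : INR (m - k) * c * (- ln c) = INR (m - k) * phi c).
  { destruct Hc as [Hc|Hc]. rewrite phi_pos by auto. ring. subst c. rewrite phi_0 by lra. ring. }
  fold q. lra.
Qed.

Definition aT : R := ln 2 - 1 - ln (ln 2).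

Lemma aT_nonneg : 0 <= aT.
Proof. unfold aT. pose proof ln2_pos. pose proof (ln_le_sub1 (ln 2) H). lra. Qed.

Lemma chord a l : 0 < a -> a <= l <= 2 * a -> - (l * ln a) - 2 * ln 2 * (l - a) <= phi l.
Proof.
  intros Ha [H1 H2]. assert (Hl : 0 < l) by lra. rewrite phi_pos by auto.
  pose proof (gibbs_term a l ltac:(lra) ltac:(lra) ltac:(lra)) as G1.
  pose proof (gibbs_term (2 * a) l ltac:(lra) ltac:(lra) ltac:(lra)) as G2.
  rewrite phi_pos in G1, G2 by lra. rewrite ln_mult in G2 by lra.
  assert (K1 : (2 * a - l) * (- (a * ln a)) <= (2 * a - l) * (- a * ln l + l - a))
    by (apply Rmult_le_compat_l; lra).
  assert (K2 : (l - a) * (- (2 * a * (ln 2 + ln a))) <= (l - a) * (- (2 * a) * ln l + l - 2 * a))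
    by (apply Rmult_le_compat_l; lra).
  assert (K : a * (- (l * ln a) - 2 * ln 2 * (l - a)) <= a * (- (l * ln l))) by nra.
  apply Rmult_le_reg_l with a; auto.
Qed.

Lemma key a c : 0 < a -> 0 < c -> 2 * ln 2 * (c - a) <= c * (ln c - ln a) + c * aT.
Proof.
  intros Ha Hc. pose proof ln2_pos as HT. unfold aT.
  set (v := c / (2 * ln 2 * a)).
  assert (Hv : 0 < v) by (unfold v; apply Rdiv_lt_0_compat; nra).
  pose proof (ln_le_sub1 (/ v) ltac:(apply Rinv_0_lt_compat; auto)) as H.
  rewrite ln_Rinv in H by auto.
  assert (Hlv : ln v = ln c - ln 2 - ln (ln 2) - ln a).
  { unfold v, Rdiv. rewrite ln_mult, ln_Rinv, !ln_mult; try nra. apply Rinv_0_lt_compat; nra. }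
  assert (Hiv : c * / v = 2 * ln 2 * a) by (unfold v; field; split; lra).
  assert (c * (- ln v) <= c * (/ v - 1)) by (apply Rmult_le_compat_l; lra).
  nra.
Qed.

Lemma deficit b (l : nat -> R) c :
  (1 <= b)%nat -> 0 <= c -> rsum b l = INR b * c -> (forall d, (d < b)%nat -> 0 <= l d) ->
  (b = 1%nat \/ exists a, 0 < a /\ forall d, (d < b)%nat -> a <= l d <= 2 * a) ->
  INR b * phi c - INR b * c * aT <= rsum b (fun d => phi (l d)).
Proof.
  intros Hb Hc Hsum Hl [Hb1 | [a [Ha Hab]]].
  - subst b. simpl in *. rewrite Rplus_0_l in *. rewrite Rmult_1_l in Hsum. rewrite Hsum.
    pose proof aT_nonneg. nra.
  - assert (Hlow : rsum b (fun d => (- ln a - 2 * ln 2) * l d + 2 * ln 2 * a)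
                   <= rsum b (fun d => phi (l d))).
    { apply rsum_le. intros d Hd. pose proof (chord a (l d) Ha (Hab d Hd)). lra. }
    rewrite rsum_plus, rsum_scal, rsum_const, Hsum in Hlow.
    assert (Hbpos : 0 < INR b) by (apply lt_0_INR; lia).
    assert (Hcpos : 0 < c).
    { assert (INR b * a <= INR b * c).
      { rewrite <- Hsum, <- rsum_const. apply rsum_le. intros d Hd; apply Hab; auto. }
      nra. }
    pose proof (key a c Ha Hcpos). rewrite phi_pos by auto.
    assert (INR b * (2 * ln 2 * (c - a)) <= INR b * (c * (ln c - ln a) + c * aT))
      by (apply Rmult_le_compat_l; lra).
    nra.
Qed.

Fixpoint amin (L : nat -> R) (k c : nat) : nat :=
  match c with
  | O => k
  | S c' => let j := amin L k c' in if Rle_dec (L j) (L (k + S c')%nat) then j else (k + S c')%nat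
  end.

Lemma amin_range L k c : (k <= amin L k c <= k + c)%nat.
Proof. induction c; simpl. lia. destruct (Rle_dec _ _); lia. Qed.

Lemma amin_min L k c j : (k <= j <= k + c)%nat -> L (amin L k c) <= L j.
Proof.
  induction c; simpl; intros Hj. replace j with k by lia; lra.
  destruct (Nat.eq_dec j (k + S c)).
  - subst. destruct (Rle_dec _ _); lra.
  - specialize (IHc ltac:(lia)). destruct (Rle_dec _ _); lra.
Qed.

Fixpoint asg (k m : nat) (p : nat -> R) (t : nat) : nat -> nat :=
  match t with
  | O => fun i => i
  | S t' => if Nat.ltb t' m then asg k m p t'
            else fun i => if Nat.eqb i t' then amin (pushforward t' (asg k m p t') p) k (m - k - 1)
                          else asg k m p t' i
  end.

Lemma asg_S_lt k m p t i : (i < t)%nat -> asg k m p (S t) i = asg k m p t i.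
Proof.
  intros. simpl. destruct (Nat.ltb t m); auto.
  replace (Nat.eqb i t) with false; auto. symmetry; apply Nat.eqb_neq; lia.
Qed.

Lemma asg_stable k m p t d i : (i < t)%nat -> asg k m p (t + d) i = asg k m p t i.
Proof.
  induction d; intros. rewrite Nat.add_0_r; auto.
  rewrite Nat.add_succ_r, asg_S_lt by lia. auto.
Qed.

Lemma asg_small k m p t i : (i < m)%nat -> asg k m p t i = i.
Proof.
  induction t; intros; simpl; auto. destruct (Nat.ltb t m) eqn:E; auto.
  apply Nat.ltb_ge in E. replace (Nat.eqb i t) with false; auto. symmetry; apply Nat.eqb_neq; lia.
Qed.

Lemma amin_ext L L' k c : (forall j, L j = L' j) -> amin L k c = amin L' k c.
Proof. intros H. induction c; simpl; auto. rewrite IHc, !H. auto. Qed.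

Lemma asg_big k m p n i : (m <= i)%nat -> (i < n)%nat ->
  asg k m p n i = amin (pushforward i (asg k m p n) p) k (m - k - 1).
Proof.
  intros H1 H2.
  assert (E : asg k m p n i = asg k m p (S i) i).
  { replace n with (S i + (n - S i))%nat at 1 by lia. apply asg_stable; lia. }
  rewrite E. cbn [asg]. replace (Nat.ltb i m) with false by (symmetry; apply Nat.ltb_ge; lia).
  rewrite Nat.eqb_refl. apply amin_ext. intros j. unfold pushforward. apply rsum_ext. intros j' Hj.
  replace n with (i + (n - i))%nat by lia. rewrite asg_stable by lia. auto.
Qed.


Lemma lower_gen n m p k c :
  (k < m)%nat -> (m < n)%nat -> (forall i, (i < n)%nat -> 0 <= p i) ->
  (forall i, (S i < n)%nat -> p (S i) <= p i) -> 0 <= c ->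
  rsum k p + INR (m - k) * c = 1 -> rsum n p = 1 ->
  ((k + 1 = m)%nat \/ forall i, (k <= i)%nat -> (i < n)%nat -> p i < c) ->
  exists f, surj_onto n m f /\
    rsum k (fun i => phi (p i)) + INR (m - k) * phi c - aT <= rsum m (fun j => phi (pushforward n f p j)).
Proof.
  intros Hkm Hmn Hp Hs Hc Hsum Hn Hcase.
  set (F := asg k m p n).
  assert (Fs : forall i, (i < m)%nat -> F i = i) by (intros; apply asg_small; auto).
  assert (Fb : forall i, (m <= i)%nat -> (i < n)%nat -> F i = amin (pushforward i F p) k (m - k - 1))
    by (intros; apply asg_big; auto).
  assert (Fr : forall i, (m <= i)%nat -> (i < n)%nat -> (k <= F i < m)%nat).
  { intros. rewrite Fb by auto. pose proof (amin_range (pushforward i F p) k (m - k - 1)). lia. }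
  assert (Hsurj : surj_onto n m F).
  { split.
    - intros i Hi. destruct (Nat.lt_ge_cases i m). rewrite Fs; auto. pose proof (Fr i H Hi); lia.
    - intros j Hj. exists j. split. lia. auto. }
  exists F. split; auto.
  set (q := pushforward n F p).
  assert (Hq0 : forall j, 0 <= q j) by (intros; apply push_nonneg; auto).
  assert (Hqs : forall j, (j < k)%nat -> q j = p j).
  { intros j Hj. unfold q, pushforward.
    transitivity (rsum n (fun i => if Nat.eqb i j then p i else 0)).
    2:{ rewrite rsum_pick'. replace (Nat.ltb j n) with true by (symmetry; apply Nat.ltb_lt; lia). auto. }
    apply rsum_ext. intros i Hi. destruct (Nat.lt_ge_cases i m).
    - rewrite Fs; auto.
    - pose proof (Fr i H Hi). replace (Nat.eqb (F i) j) with false by (symmetry; apply Nat.eqb_neq; lia).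
      replace (Nat.eqb i j) with false by (symmetry; apply Nat.eqb_neq; lia). auto. }
  assert (Hsplit : forall g : nat -> R, rsum m g = rsum k g + rsum (m - k) (fun d => g (k + d)%nat)).
  { intros. replace m with (k + (m - k))%nat at 1 by lia. apply rsum_split. }
  assert (Hk_eq : forall g : R -> R, rsum k (fun j => g (q j)) = rsum k (fun j => g (p j))).
  { intros. apply rsum_ext. intros. rewrite Hqs; auto. }
  set (l := fun d => q (k + d)%nat).
  assert (Hl_sum : rsum (m - k) l = INR (m - k) * c).
  { pose proof (push_total n m F p (proj1 Hsurj)). fold q in H. rewrite Hsplit in H.
    assert (rsum k q = rsum k p) by (apply rsum_ext; intros; apply Hqs; auto).
    unfold l. lra. }
  assert (Hpk : 0 <= rsum k p) by (apply rsum_nonneg; intros; apply Hp; lia).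
  assert (Hbc : INR (m - k) * c <= 1) by lra.
  assert (Hdef : INR (m - k) * phi c - INR (m - k) * c * aT <= rsum (m - k) (fun d => phi (l d))).
  { apply deficit; auto. lia. intros; apply Hq0.
    destruct Hcase as [Hk1 | Hstrict]. left; lia. right.
    set (L := fun t j => pushforward t F p j).
    assert (Inv : forall d, (m + d <= n)%nat -> forall j, (k <= j < m)%nat ->
              L (m + d)%nat j = p j \/ forall j', (k <= j' < m)%nat -> L (m + d)%nat j <= 2 * L (m + d)%nat j').
    { induction d; intros Hd j Hj.
      - left. unfold L, pushforward. rewrite Nat.add_0_r.
        transitivity (rsum m (fun i => if Nat.eqb i j then p i else 0)).
        + apply rsum_ext. intros. rewrite Fs; auto.
        + rewrite rsum_pick'. replace (Nat.ltb j m) with true; auto. symmetry; apply Nat.ltb_lt; lia.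
      - set (t := (m + d)%nat). replace (m + S d)%nat with (S t) by (unfold t; lia).
        assert (Ht : (m <= t)%nat /\ (t < n)%nat) by (unfold t; lia).
        assert (Hmono : forall j', L t j' <= L (S t) j').
        { intros. unfold L. rewrite push_S. pose proof (Hp t ltac:(lia)).
          destruct (Nat.eqb (F t) j'); lra. }
        set (js := F t).
        assert (Hjs : (k <= js < m)%nat) by (apply Fr; lia).
        assert (Hmin : forall j', (k <= j' < m)%nat -> L t js <= L t j').
        { intros j' Hj'. unfold js. rewrite Fb by lia. apply amin_min. lia. }
        assert (Hpt : p t <= L t js).
        { pose proof (sorted_le n p Hs js t ltac:(lia) ltac:(lia)).
          pose proof (push_ge t F p js js ltac:(intros; apply Hp; lia) ltac:(lia) ltac:(apply Fs; lia)).
          unfold L. lra. }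
        destruct (Nat.eq_dec j js) as [Ej | Ej].
        + right. intros j' Hj'. subst j. unfold L at 1. rewrite push_S. fold js. rewrite Nat.eqb_refl.
          pose proof (Hmin j' Hj'). pose proof (Hmono j'). unfold L in *. lra.
        + assert (Lj : L (S t) j = L t j).
          { unfold L. rewrite push_S. fold js. replace (Nat.eqb js j) with false; [ring|].
            symmetry; apply Nat.eqb_neq; auto. }
          rewrite Lj. destruct (IHd ltac:(lia) j Hj) as [Hl | Hr].
          * left; auto.
          * right. intros j' Hj'. pose proof (Hr j' Hj'). pose proof (Hmono j'). unfold t in *. lra. }
    assert (Inv_n : forall j, (k <= j < m)%nat -> q j = p j \/ forall j', (k <= j' < m)%nat -> q j <= 2 * q j').
    { intros. pose proof (Inv (n - m)%nat ltac:(lia) j H). replace (m + (n - m))%nat with n in H0 by lia.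
      exact H0. }
    destruct (rsum_lt_ex (m - k) l c ltac:(lia) ltac:(lra)) as [dm [Hdm Hcdm]].
    set (jm := (k + dm)%nat). unfold l in Hcdm. fold jm in Hcdm.
    set (j0 := amin q k (m - k - 1)).
    assert (Hj0 : (k <= j0 < m)%nat) by (unfold j0; pose proof (amin_range q k (m - k - 1)); lia).
    assert (Hamin : forall j, (k <= j < m)%nat -> q j0 <= q j) by (intros; apply amin_min; lia).
    assert (Hjm : q jm <= 2 * q j0).
    { destruct (Inv_n jm ltac:(unfold jm; lia)) as [E | E].
      - pose proof (Hstrict jm ltac:(unfold jm; lia) ltac:(unfold jm; lia)). lra.
      - apply E; auto. }
    assert (Hcpos : 0 < c) by (pose proof (Hstrict k ltac:(lia) ltac:(lia)); pose proof (Hp k ltac:(lia)); lra).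
    exists (q j0). split. lra.
    intros d Hd. unfold l. split. apply Hamin; lia.
    destruct (Inv_n (k + d)%nat ltac:(lia)) as [E | E].
    - pose proof (Hstrict (k + d)%nat ltac:(lia) ltac:(lia)). lra.
    - apply E; auto. }
  rewrite Hsplit. rewrite (Hk_eq phi).
  pose proof aT_nonneg.
  assert (INR (m - k) * c * aT <= aT).
  { assert (0 <= (1 - INR (m - k) * c) * aT) by (apply Rmult_le_pos; lra). nra. }
  unfold l in Hdef. lra.
Qed.

Definition lsum (L : list nat) (g : nat -> R) : R := fold_right (fun j acc => g j + acc) 0 L.

Lemma lsum_ext L g g' : (forall j, In j L -> g j = g' j) -> lsum L g = lsum L g'.
Proof. induction L; simpl; intros H; auto. rewrite H, IHL; auto. Qed.

Lemma lsum_app L1 L2 g : lsum (L1 ++ L2) g = lsum L1 g + lsum L2 g.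
Proof. induction L1; simpl. ring. rewrite IHL1; ring. Qed.

Lemma lsum_seq t g : rsum t g = lsum (seq 0 t) g.
Proof. induction t. reflexivity. rewrite seq_S, lsum_app. simpl. rewrite IHt. ring. Qed.

Lemma lsum_remove L j g : NoDup L -> In j L -> lsum L g = g j + lsum (remove Nat.eq_dec j L) g.
Proof.
  induction L as [|a L IH]; intros HN Hj. inversion Hj.
  apply NoDup_cons_iff in HN as [Ha HN]. simpl. destruct (Nat.eq_dec j a).
  - subst. rewrite notin_remove; auto.
  - destruct Hj. congruence. simpl. rewrite IH; auto. ring.
Qed.

Lemma NoDup_remove' L j : NoDup L -> NoDup (remove Nat.eq_dec j L).
Proof.
  induction L as [|a L IH]; intros HN; simpl. constructor.
  apply NoDup_cons_iff in HN as [Ha HN]. destruct (Nat.eq_dec j a). auto.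
  constructor; auto. intro H. apply in_remove in H. tauto.
Qed.

Lemma length_remove' L j : NoDup L -> In j L -> length (remove Nat.eq_dec j L) = (length L - 1)%nat.
Proof.
  induction L as [|a L IH]; intros HN Hj. inversion Hj.
  apply NoDup_cons_iff in HN as [Ha HN]. simpl. destruct (Nat.eq_dec j a).
  - subst. rewrite notin_remove; auto. lia.
  - destruct Hj. congruence. simpl. rewrite IH; auto. destruct L. inversion H. simpl; lia.
Qed.

Lemma two_point_aux s a b : 0 <= s -> s <= a -> a <= b -> phi s + phi (a + b - s) <= phi a + phi b.
Proof.
  intros Hs Hsa Hab. destruct (Rle_dec a 0).
  - assert (a = 0) by lra. assert (s = 0) by lra. subst. replace (0 + b - 0) with b by ring. lra.
  - assert (Ha : 0 < a) by lra. assert (Hb : 0 < b) by lra.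
    pose proof (gibbs_term s a Hs ltac:(lra) ltac:(lra)) as G1.
    pose proof (gibbs_term (a + b - s) b ltac:(lra) ltac:(lra) ltac:(lra)) as G2.
    rewrite (phi_pos a), (phi_pos b) by auto.
    pose proof (ln_le a b Ha Hab).
    assert ((a - s) * ln a <= (a - s) * ln b) by (apply Rmult_le_compat_l; lra).
    nra.
Qed.

Lemma two_point s a b : 0 <= s -> s <= a -> s <= b -> phi s + phi (a + b - s) <= phi a + phi b.
Proof.
  intros. destruct (Rle_dec a b). apply two_point_aux; auto.
  replace (a + b - s) with (b + a - s) by ring. rewrite (Rplus_comm (phi a)).
  apply two_point_aux; auto; lra.
Qed.

Lemma minL n : forall (L : list nat) p f, NoDup L -> (1 <= length L)%nat -> (length L <= n)%nat ->
  (forall i, (i < n)%nat -> 0 <= p i) -> (forall i, (S i < n)%nat -> p (S i) <= p i) ->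
  (forall i, (i < n)%nat -> In (f i) L) -> (forall j, In j L -> exists i, (i < n)%nat /\ f i = j) ->
  phi (rsum (n - length L + 1) p) + rsum (length L - 1) (fun r => phi (p (n - length L + 1 + r)%nat))
  <= lsum L (fun j => phi (pushforward n f p j)).
Proof.
  induction n as [|n' IH]; intros L p f HN H1 H2 Hp Hs Hin Hsurj. lia.
  destruct (Nat.eq_dec (length L) 1) as [E1|E1].
  - destruct L as [|j0 [|x L]]; simpl in E1; try lia. cbn [length].
    replace (S n' - 1 + 1)%nat with (S n') by lia. replace (1 - 1)%nat with O by lia.
    unfold lsum; cbn [fold_right].
    assert (pushforward (S n') f p j0 = rsum (S n') p).
    { unfold pushforward. apply rsum_ext. intros i Hi. destruct (Hin i Hi) as [E|E]; [|inversion E].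
      rewrite E, Nat.eqb_refl. auto. }
    rewrite H. cbn [rsum]. lra.
  - set (n := S n') in *.
    assert (ClaimA : forall f', (forall i, (i < n)%nat -> In (f' i) L) ->
        (forall j, In j L -> exists i, (i < n)%nat /\ f' i = j) ->
        (forall i, (i < n')%nat -> f' i <> f' n') ->
        phi (rsum (n - length L + 1) p) + rsum (length L - 1) (fun r => phi (p (n - length L + 1 + r)%nat))
        <= lsum L (fun j => phi (pushforward n f' p j))).
    { intros f' Hin' Hsurj' Halone. set (j1 := f' n').
      assert (Hj1 : In j1 L) by (apply Hin'; unfold n; lia).
      set (L' := remove Nat.eq_dec j1 L).
      assert (HlenL' : length L' = (length L - 1)%nat) by (apply length_remove'; auto).
      assert (IHa := IH L' p f' (NoDup_remove' L j1 HN) ltac:(lia) ltac:(unfold n in *; lia)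
               ltac:(intros; apply Hp; unfold n; lia) ltac:(intros; apply Hs; unfold n; lia)).
      specialize (IHa ltac:(intros i Hi; apply in_in_remove; [apply Halone; auto | apply Hin'; unfold n; lia])).
      assert (Hs' : forall j, In j L' -> exists i, (i < n')%nat /\ f' i = j).
      { intros j Hj. apply in_remove in Hj as [HjL Hjn]. destruct (Hsurj' j HjL) as [i [Hi Hfi]].
        exists i. split; auto. destruct (Nat.eq_dec i n'). subst. unfold j1 in Hjn. congruence. unfold n in Hi; lia. }
      specialize (IHa Hs').
      rewrite (lsum_remove L j1) by auto. fold L'.
      assert (Hpj1 : pushforward n f' p j1 = p n').
      { unfold n. rewrite (push_S n' f' p j1). fold j1. rewrite Nat.eqb_refl.
        replace (pushforward n' f' p j1) with (rsum n' (fun _ => 0)).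
        rewrite rsum_const. ring. unfold pushforward. apply rsum_ext. intros i Hi.
        replace (Nat.eqb (f' i) j1) with false; auto. symmetry; apply Nat.eqb_neq; apply Halone; auto. }
      assert (HL' : lsum L' (fun j => phi (pushforward n f' p j)) = lsum L' (fun j => phi (pushforward n' f' p j))).
      { apply lsum_ext. intros j Hj. apply in_remove in Hj as [_ Hjn]. unfold n. rewrite push_S. fold j1.
        replace (Nat.eqb j1 j) with false. rewrite Rplus_0_r; auto. symmetry; apply Nat.eqb_neq; auto. }
      rewrite Hpj1, HL'. rewrite HlenL' in IHa.
      replace (n' - (length L - 1) + 1)%nat with (n - length L + 1)%nat in IHa by (unfold n in *; lia).
      replace (length L - 1)%nat with (S (length L - 1 - 1)) by lia. cbn [rsum].
      replace (n - length L + 1 + (length L - 1 - 1))%nat with n' by (unfold n in *; lia).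
      replace (length L - 1 - 1)%nat with (length L - 1 - 1)%nat in IHa by lia. lra. }
    destruct (classic (exists i, (i < n')%nat /\ f i = f n')) as [[i0 [Hi0 Hfi0]] | Hno].
    + set (j1 := f n').
      assert (Hj1 : In j1 L) by (apply Hin; unfold n; lia).
      destruct (remove Nat.eq_dec j1 L) as [|k L2] eqn:EL'.
      { pose proof (length_remove' L j1 HN Hj1). rewrite EL' in H. simpl in H. lia. }
      assert (Hk : In k (remove Nat.eq_dec j1 L)) by (rewrite EL'; left; auto).
      pose proof Hk as Hk'. apply in_remove in Hk' as [HkL Hkj1].
      set (f2 := fun i => if Nat.eqb i n' then j1 else if Nat.eqb (f i) j1 then k else f i).
      assert (Hin2 : forall i, (i < n)%nat -> In (f2 i) L).
      { intros. unfold f2. destruct (Nat.eqb i n'); auto. destruct (Nat.eqb (f i) j1); auto. }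
      assert (Hsurj2 : forall j, In j L -> exists i, (i < n)%nat /\ f2 i = j).
      { intros j Hj. destruct (Nat.eq_dec j j1).
        - exists n'. split. unfold n; lia. unfold f2. rewrite Nat.eqb_refl. auto.
        - destruct (Hsurj j Hj) as [i [Hi Hfi]].
          assert (i <> n') by (intro; subst; unfold j1 in n0; congruence).
          destruct (Nat.eq_dec j k).
          + exists i. split; auto. unfold f2. replace (Nat.eqb i n') with false by (symmetry; apply Nat.eqb_neq; auto).
            replace (Nat.eqb (f i) j1) with false by (symmetry; apply Nat.eqb_neq; congruence). congruence.
          + exists i. split; auto. unfold f2. replace (Nat.eqb i n') with false by (symmetry; apply Nat.eqb_neq; auto).
            replace (Nat.eqb (f i) j1) with false by (symmetry; apply Nat.eqb_neq; congruence). auto. }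
      assert (Halone2 : forall i, (i < n')%nat -> f2 i <> f2 n').
      { intros i Hi. unfold f2. rewrite Nat.eqb_refl. replace (Nat.eqb i n') with false by (symmetry; apply Nat.eqb_neq; lia).
        destruct (Nat.eqb (f i) j1) eqn:E. auto. apply Nat.eqb_neq; auto. }
      eapply Rle_trans. apply (ClaimA f2 Hin2 Hsurj2 Halone2).
      assert (Hk2 : In k (remove Nat.eq_dec j1 L)) by auto.
      rewrite (lsum_remove L j1), (lsum_remove _ k) by (auto; apply NoDup_remove'; auto).
      rewrite (lsum_remove L j1 (fun j => phi (pushforward n f p j))), (lsum_remove _ k (fun j => phi (pushforward n f p j)))
        by (auto; apply NoDup_remove'; auto).
      set (L3 := remove Nat.eq_dec k (remove Nat.eq_dec j1 L)).
      assert (H3 : lsum L3 (fun j => phi (pushforward n f2 p j)) = lsum L3 (fun j => phi (pushforward n f p j))).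
      { apply lsum_ext. intros j Hj. unfold L3 in Hj. apply in_remove in Hj as [Hj Hjk].
        apply in_remove in Hj as [Hj Hjj1]. f_equal. unfold pushforward. apply rsum_ext. intros i Hi.
        unfold f2. destruct (Nat.eqb i n') eqn:E.
        - apply Nat.eqb_eq in E; subst. fold j1. replace (Nat.eqb j1 j) with false; auto.
          symmetry; apply Nat.eqb_neq; auto.
        - destruct (Nat.eqb (f i) j1) eqn:E2.
          + apply Nat.eqb_eq in E2. rewrite E2.
            replace (Nat.eqb k j) with false by (symmetry; apply Nat.eqb_neq; auto).
            replace (Nat.eqb j1 j) with false by (symmetry; apply Nat.eqb_neq; auto). auto.
          + auto. }
      assert (Hpn : (n' < n)%nat) by (unfold n; lia).
      assert (Hf2j1 : pushforward n f2 p j1 = p n').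
      { unfold pushforward. transitivity (rsum n (fun i => if Nat.eqb i n' then p i else 0)).
        - apply rsum_ext. intros i Hi. unfold f2. destruct (Nat.eqb i n') eqn:E. rewrite Nat.eqb_refl; auto.
          destruct (Nat.eqb (f i) j1) eqn:E2.
          + replace (Nat.eqb k j1) with false; auto. symmetry; apply Nat.eqb_neq; auto.
          + rewrite E2; auto.
        - rewrite rsum_pick'. replace (Nat.ltb n' n) with true; auto. symmetry; apply Nat.ltb_lt; auto. }
      assert (Hf2k : pushforward n f2 p k = pushforward n f p k + pushforward n f p j1 - p n').
      { unfold pushforward. replace (p n') with (rsum n (fun i => if Nat.eqb i n' then p i else 0)).
        rewrite <- rsum_plus, <- rsum_minus. apply rsum_ext. intros i Hi. unfold f2.
        destruct (Nat.eqb i n') eqn:E.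
        - apply Nat.eqb_eq in E; subst. fold j1. rewrite Nat.eqb_refl.
          replace (Nat.eqb j1 k) with false by (symmetry; apply Nat.eqb_neq; auto). ring.
        - destruct (Nat.eqb (f i) j1) eqn:E2.
          + rewrite Nat.eqb_refl. apply Nat.eqb_eq in E2. rewrite E2.
            replace (Nat.eqb j1 k) with false by (symmetry; apply Nat.eqb_neq; auto). ring.
          + destruct (Nat.eqb (f i) k); ring.
        - rewrite rsum_pick'. replace (Nat.ltb n' n) with true; auto. symmetry; apply Nat.ltb_lt; auto. }
      rewrite H3, Hf2j1, Hf2k.
      assert (HB : p n' <= pushforward n f p j1) by (apply push_ge; auto).
      destruct (Hsurj k HkL) as [ik [Hik Hfik]].
      assert (HK : p n' <= pushforward n f p k).
      { pose proof (push_ge n f p k ik Hp Hik Hfik). pose proof (sorted_le n p Hs ik n' ltac:(lia) Hpn). lra. }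
      pose proof (two_point (p n') (pushforward n f p k) (pushforward n f p j1) (Hp n' Hpn) HK HB).
      lra.
    + apply ClaimA; auto. intros i Hi E. apply Hno. exists i; auto.
Qed.

Fixpoint tt (x : R) (k : nat) : R :=
  match k with O => 1 | S k' => tt x k' * x / INR (S k') end.

Lemma tt_eq x k : / INR (fact k) * x ^ k = tt x k.
Proof.
  induction k as [|k IH].
  - simpl. field.
  - cbn [tt]. rewrite <- IH.
    assert (INR (fact k) <> 0) by apply INR_fact_neq_0.
    assert (INR (S k) <> 0) by (apply not_0_INR; lia).
    replace (INR (fact (S k))) with (INR (S k) * INR (fact k))
      by (rewrite <- mult_INR; reflexivity).
    rewrite <- tech_pow_Rmult. field; auto.
Qed.

Lemma E1_tt x N : Exp_prop.E1 x N = sum_f_R0 (tt x) N.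
Proof. unfold Exp_prop.E1. apply sum_eq. intros; apply tt_eq. Qed.

Lemma tt_nonneg x k : 0 <= x -> 0 <= tt x k.
Proof.
  intros Hx; induction k; cbn [tt]. lra.
  apply Rmult_le_pos. apply Rmult_le_pos; auto. left; apply Rinv_0_lt_compat, lt_0_INR; lia.
Qed.

Lemma exp_lower x N : 0 <= x -> sum_f_R0 (tt x) N <= exp x.
Proof.
  intros Hx. rewrite <- E1_tt. apply growing_ineq.
  - intro n. unfold Un_growing in *. rewrite !E1_tt. cbn [sum_f_R0]. pose proof (tt_nonneg x (S n) Hx). lra.
  - apply Exp_prop.E1_cvg.
Qed.

Lemma div_nonneg a b : 0 <= a -> 0 < b -> 0 <= a / b.
Proof. intros. unfold Rdiv. apply Rmult_le_pos; auto. left; apply Rinv_0_lt_compat; auto. Qed.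
Lemma div_lt1 a b : 0 <= a -> a < b -> a / b < 1.
Proof. intros. apply (Rmult_lt_reg_r b). lra. unfold Rdiv. rewrite Rmult_assoc, Rinv_l; lra. Qed.

Definition VV x N := sum_f_R0 (tt x) N + tt x (S N) / (1 - x / INR (S (S N))).

Lemma geo_step a r r' : 0 <= a -> 0 <= r' -> r' <= r -> r < 1 ->
  a + a * r / (1 - r') <= a / (1 - r).
Proof.
  intros. assert (a * r / (1 - r') <= a * r / (1 - r)).
  { unfold Rdiv. apply Rmult_le_compat_l. apply Rmult_le_pos; lra.
    apply Rinv_le_contravar; lra. }
  assert (a + a * r / (1 - r) = a / (1 - r)) by (field; lra). lra.
Qed.

Lemma VV_step x N : 0 <= x < 2 -> VV x (S N) <= VV x N.
Proof.
  intros Hx. unfold VV. cbn [sum_f_R0].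
  assert (HN : INR (S (S N)) = INR N + 2) by (rewrite !S_INR; ring).
  assert (HN' : INR (S (S (S N))) = INR N + 3) by (rewrite !S_INR; ring).
  assert (H0 : 0 <= INR N) by apply pos_INR.
  replace (tt x (S (S N))) with (tt x (S N) * (x / INR (S (S N))))
    by (change (tt x (S (S N))) with (tt x (S N) * x / INR (S (S N))); rewrite HN; field; lra).
  rewrite HN, HN'.
  pose proof (geo_step (tt x (S N)) (x / (INR N + 2)) (x / (INR N + 3))
    (tt_nonneg x (S N) (proj1 Hx))).
  assert (x / (INR N + 3) <= x / (INR N + 2)).
  { unfold Rdiv. apply Rmult_le_compat_l. lra. apply Rinv_le_contravar; lra. }
  assert (0 <= x / (INR N + 3)) by (apply div_nonneg; lra).
  assert (x / (INR N + 2) < 1) by (apply div_lt1; lra).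
  replace (tt x (S N) * (x / (INR N + 2)) / (1 - x / (INR N + 3)))
    with (tt x (S N) * (x / (INR N + 2)) / (1 - x / (INR N + 3))) by reflexivity.
  specialize (H H2 H1 H3). lra.
Qed.

Lemma exp_upper x K : 0 <= x < 2 -> exp x <= VV x K.
Proof.
  intros Hx.
  assert (Hd : forall d, VV x (K + d) <= VV x K).
  { induction d. rewrite Nat.add_0_r; lra.
    rewrite Nat.add_succ_r. pose proof (VV_step x (K + d) Hx). lra. }
  assert (HV : forall N, sum_f_R0 (tt x) N <= VV x N).
  { intro N. unfold VV. assert (0 <= tt x (S N) / (1 - x / INR (S (S N)))).
    { apply div_nonneg. apply tt_nonneg; lra.
      assert (x / INR (S (S N)) < 1). apply div_lt1. lra.
      rewrite !S_INR; pose proof (pos_INR N); lra. lra. }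
    lra. }
  assert (Hg : forall N M, (N <= M)%nat -> sum_f_R0 (tt x) N <= sum_f_R0 (tt x) M).
  { intros N M HNM. induction HNM. lra. cbn [sum_f_R0].
    pose proof (tt_nonneg x (S m) (proj1 Hx)). lra. }
  apply Rle_cv_lim with (Un := Exp_prop.E1 x) (Vn := fun _ => VV x K).
  - intro N. rewrite E1_tt. destruct (le_lt_dec N K).
    + pose proof (Hg N K l). pose proof (HV K). lra.
    + replace N with (K + (N - K))%nat by lia. pose proof (HV (K + (N - K))%nat).
      pose proof (Hd (N - K)%nat). lra.
  - apply Exp_prop.E1_cvg.
  - intros e He. exists O. intros. unfold Rdist. rewrite Rminus_diag, Rabs_R0. lra.
Qed.


Lemma ln2_lower : 6931471 / 10000000 <= ln 2.
Proof.
  assert (exp (6931471 / 10000000) <= 2).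
  { eapply Rle_trans. apply (exp_upper _ 12). lra.
    unfold VV. cbn [sum_f_R0 tt INR]. lra. }
  rewrite <- (ln_exp (6931471 / 10000000)). apply ln_le. apply exp_pos. auto.
Qed.


Lemma lnL_lower : - (366515 / 1000000) <= ln (6931471 / 10000000).
Proof.
  assert (10000000 / 6931471 <= exp (366515 / 1000000)).
  { eapply Rle_trans; [| apply (exp_lower _ 10); lra].
    cbn [sum_f_R0 tt INR]. lra. }
  assert (ln (10000000 / 6931471) <= 366515 / 1000000).
  { rewrite <- (ln_exp (366515 / 1000000)). apply ln_le; auto. lra. }
  replace (6931471 / 10000000) with (/ (10000000 / 6931471)) by field.
  rewrite ln_Rinv by lra. lra.
Qed.


Lemma alpha_lt : alpha < 0.08608.
Proof.
  pose proof ln2_lower as HL. pose proof lnL_lower as Hy.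
  set (T := ln 2) in *. set (L := 6931471 / 10000000) in *.
  assert (HT1 : T < 1).
  { unfold T. rewrite <- (ln_exp 1). apply ln_increasing. lra.
    pose proof (exp_ineq1 1). lra. }
  assert (HLpos : 0 < L) by (unfold L; lra).
  assert (HTpos : 0 < T) by lra.
  assert (Hln : ln L - ln T <= L / T - 1).
  { replace (ln L - ln T) with (ln (L / T)).
    apply ln_le_sub1. apply Rdiv_lt_0_compat; auto.
    unfold Rdiv. rewrite ln_mult, ln_Rinv; auto. apply Rinv_0_lt_compat; auto. }
  assert (HLT : L / T * T = L) by (field; lra).
  unfold alpha. fold T.
  assert (H : 0.91392 * T < 1 + ln T).
  { assert (Hq : 0 <= (T - L) * (1 - T)) by (apply Rmult_le_pos; lra).
    assert (0.91392 * T * T < (1 + ln L + 1 - L / T) * T).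
    { replace ((1 + ln L + 1 - L / T) * T) with (2 * T + ln L * T - L) by (field; lra).
      assert (ln L * T >= - (366515 / 1000000) * T) by nra.
      unfold L in *; nra. }
    assert (0.91392 * T < 1 + ln L + 1 - L / T) by nra.
    lra. }
  assert ((1 + ln T) / T > 0.91392).
  { apply Rmult_gt_reg_r with T; auto. unfold Rdiv. rewrite Rmult_assoc, Rinv_l; lra. }
  lra.
Qed.

Lemma tail_split n p k : (k <= n)%nat -> rsum k p + Defs.tail n p k = rsum n p.
Proof.
  intros H. unfold Defs.tail. replace n with (k + (n - k))%nat by lia. rewrite !rsum_split.
  replace (rsum k (fun j => if Nat.leb k j then p j else 0)) with (rsum k (fun _ => 0)).
  - rewrite rsum_const. rewrite (rsum_ext _ (fun i => if Nat.leb k (k + i) then p (k + i)%nat else 0) (fun i => p (k + i)%nat)).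
    ring. intros. replace (Nat.leb k (k + i)) with true; auto. symmetry; apply Nat.leb_le; lia.
  - apply rsum_ext. intros. replace (Nat.leb k i) with false; auto. symmetry; apply Nat.leb_gt; lia.
Qed.

Lemma tail_S n p k : (k < n)%nat -> Defs.tail n p k = p k + Defs.tail n p (S k).
Proof.
  intros. pose proof (tail_split n p k ltac:(lia)). pose proof (tail_split n p (S k) ltac:(lia)).
  simpl in H1. lra.
Qed.

Lemma tail_nonneg n p k : (forall i, (i < n)%nat -> 0 <= p i) -> 0 <= Defs.tail n p k.
Proof. intros. apply rsum_nonneg. intros. destruct (Nat.leb k i); auto; lra. Qed.

Lemma aux_bound n m p K : (istar_aux n m p K <= K)%nat.
Proof. induction K; simpl. lia. destruct (istar_cond n m p (S K)); lia. Qed.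

Lemma aux_spec n m p K : istar_aux n m p K = O \/ istar_cond n m p (istar_aux n m p K) = true.
Proof.
  induction K; simpl. auto. destruct (istar_cond n m p (S K)) eqn:E. right; auto. auto.
Qed.

Lemma aux_max n m p K i : (istar_aux n m p K < i <= K)%nat -> istar_cond n m p i = false.
Proof.
  induction K; simpl; intros H. lia.
  destruct (istar_cond n m p (S K)) eqn:E. lia.
  destruct (Nat.eq_dec i (S K)). subst; auto. apply IHK; lia.
Qed.

Lemma cond_true n m p i : istar_cond n m p i = true -> Defs.tail n p i / INR (m - i) <= p (i - 1)%nat.
Proof. unfold istar_cond. destruct (Rle_dec _ _); auto; discriminate. Qed.

Lemma cond_false n m p i : istar_cond n m p i = false -> p (i - 1)%nat < Defs.tail n p i / INR (m - i).
Proof. unfold istar_cond. destruct (Rle_dec _ _); try discriminate. intros; lra. Qed.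

Lemma Rm_struct n m p : (2 <= m)%nat -> (m < n)%nat -> (forall i, (i < n)%nat -> 0 <= p i) ->
  (forall i, (S i < n)%nat -> p (S i) <= p i) -> rsum n p = 1 ->
  exists k c, (k < m)%nat /\ 0 <= c /\ (forall i, (i < k)%nat -> c <= p i) /\
    rsum k p + INR (m - k) * c = 1 /\ (forall r, Rm n m p r = if Nat.ltb r k then p r else c) /\
    ((k + 1 = m)%nat \/ forall i, (k <= i)%nat -> (i < n)%nat -> p i < c).
Proof.
  intros Hm Hmn Hp Hs Hn.
  assert (HmR : 2 <= INR m) by (replace 2 with (INR 2) by (simpl; ring); apply le_INR; auto).
  destruct (Rlt_dec (p O) (1 / INR m)) as [Hu | Hu].
  - exists O, (1 / INR m). repeat split.
    + lia.
    + left; apply Rdiv_lt_0_compat; lra.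
    + intros; lia.
    + simpl. rewrite Nat.sub_0_r. field. lra.
    + intros r. unfold Rm. destruct (Rlt_dec _ _); [|contradiction]. replace (Nat.ltb r 0) with false; auto.
    + right. intros i _ Hi. pose proof (sorted_le n p Hs 0 i ltac:(lia) Hi). lra.
  - set (k := istar n m p).
    assert (Hkb : (k <= m - 1)%nat) by apply aux_bound.
    assert (Hc1 : istar_cond n m p 1 = true).
    { unfold istar_cond. destruct (Rle_dec _ _) as [|Hno]; auto. exfalso. apply Hno.
      pose proof (tail_split n p 1 ltac:(lia)). simpl in H.
      rewrite minus_INR by lia. simpl (INR 1). simpl (1 - 1)%nat.
      apply Rmult_le_reg_r with (INR m - 1). lra. unfold Rdiv. rewrite Rmult_assoc, Rinv_l by lra.
      assert (1 <= p O * INR m).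
      { apply Rnot_lt_le in Hu. apply Rmult_le_reg_r with (/ INR m). apply Rinv_0_lt_compat; lra.
        rewrite Rmult_assoc, Rinv_r by lra. lra. }
      lra. }
    assert (Hk1 : (1 <= k)%nat).
    { destruct (Nat.eq_dec k 0); [|lia]. exfalso. assert (istar_cond n m p 1 = false).
      apply (aux_max n m p (m - 1)). unfold k, istar in e. lia. congruence. }
    assert (Hck : istar_cond n m p k = true).
    { destruct (aux_spec n m p (m - 1)); unfold k, istar in *; auto. lia. }
    apply cond_true in Hck.
    assert (HmkR : 0 < INR (m - k)) by (apply lt_0_INR; lia).
    set (c := Defs.tail n p k / INR (m - k)).
    assert (Htk := tail_split n p k ltac:(lia)).
    assert (Htn := tail_nonneg n p k Hp).
    exists k, c. repeat split.
    + lia.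
    + unfold c. apply Rmult_le_pos; auto. left; apply Rinv_0_lt_compat; auto.
    + intros i Hi. pose proof (sorted_le n p Hs i (k - 1) ltac:(lia) ltac:(lia)). fold c in Hck. lra.
    + unfold c. field_simplify; lra.
    + intros r. unfold Rm. destruct (Rlt_dec _ _); [contradiction|]. cbv zeta. fold k. auto.
    + destruct (Nat.eq_dec (k + 1) m). left; auto. right.
      assert (Hf : istar_cond n m p (S k) = false).
      { apply (aux_max n m p (m - 1)). unfold k, istar. fold (istar n m p). fold k. lia. }
      apply cond_false in Hf. replace (S k - 1)%nat with k in Hf by lia.
      rewrite tail_S in Htk by lia.
      assert (HR : INR (m - S k) = INR (m - k) - 1).
      { replace (m - k)%nat with (S (m - S k)) by lia. rewrite S_INR. ring. }
      rewrite HR in Hf.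
      assert (HR1 : 0 < INR (m - k) - 1) by (rewrite <- HR; apply lt_0_INR; lia).
      assert (p k * (INR (m - k) - 1) < Defs.tail n p (S k)).
      { apply Rmult_lt_reg_r with (/ (INR (m - k) - 1)). apply Rinv_0_lt_compat; auto.
        rewrite Rmult_assoc, Rinv_r by lra. unfold Rdiv in Hf. lra. }
      assert (Hpk : p k < c).
      { unfold c. rewrite tail_S by lia. apply Rmult_lt_reg_r with (INR (m - k)); auto.
        unfold Rdiv. rewrite Rmult_assoc, Rinv_l by lra. lra. }
      intros i Hi Hin. pose proof (sorted_le n p Hs k i Hi Hin). lra.
Qed.

Theorem theorem1 (n m : nat) (p : nat -> R) :
  (2 <= m)%nat -> (m < n)%nat ->
  (forall i, (i < n)%nat -> 0 <= p i) ->
  (forall i, (S i < n)%nat -> p (S i) <= p i) ->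
  rsum n p = 1 ->
  ((forall f, surj_onto n m f -> entropy m (pushforward n f p) <= entropy m (Rm n m p)) /\
   (exists f, surj_onto n m f /\
      entropy m (Rm n m p) - alpha <= entropy m (pushforward n f p))) /\
  alpha < 0.08608 /\
  ((forall f, surj_onto n m f -> entropy m (Qm n m p) <= entropy m (pushforward n f p)) /\
   (exists f, surj_onto n m f /\
      entropy m (pushforward n f p) = entropy m (Qm n m p))).
Proof.
  intros Hm Hmn Hp Hs Hn.
  pose proof ln2_pos as HT.
  assert (HinvT : 0 < / ln 2) by (apply Rinv_0_lt_compat; auto).
  destruct (Rm_struct n m p Hm Hmn Hp Hs Hn) as [k [c [Hkm [Hc [Hcp [Hsum [HRm Hcase]]]]]]].
  assert (HRent : rsum m (fun r => phi (Rm n m p r)) = rsum k (fun i => phi (p i)) + INR (m - k) * phi c).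
  { replace m with (k + (m - k))%nat at 1 by lia. rewrite rsum_split. f_equal.
    - apply rsum_ext. intros. rewrite HRm. replace (Nat.ltb i k) with true; auto. symmetry; apply Nat.ltb_lt; auto.
    - rewrite <- rsum_const. apply rsum_ext. intros. rewrite HRm.
      replace (Nat.ltb (k + i) k) with false; auto. symmetry; apply Nat.ltb_ge; lia. }
  split; [split|split; [apply alpha_lt|split]].
  - intros f Hf. rewrite !entropy_phi, HRent. unfold Rdiv. apply Rmult_le_compat_r. lra.
    apply upper_gen; auto.
  - destruct (lower_gen n m p k c Hkm Hmn Hp Hs Hc Hsum Hn Hcase) as [f [Hf Hle]].
    exists f. split; auto. rewrite !entropy_phi, HRent.
    assert (alpha = aT / ln 2) by (unfold alpha, aT; field; lra). rewrite H.
    unfold Rdiv. rewrite <- Rmult_minus_distr_r. apply Rmult_le_compat_r; lra.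
  - intros f [Hmap Hsurj]. rewrite !entropy_phi. unfold Rdiv. apply Rmult_le_compat_r. lra.
    rewrite (lsum_seq m (fun j => phi (pushforward n f p j))).
    assert (HQ : rsum m (fun i => phi (Qm n m p i)) =
      phi (rsum (n - length (seq 0 m) + 1) p) +
      rsum (length (seq 0 m) - 1) (fun r => phi (p (n - length (seq 0 m) + 1 + r)%nat))).
    { rewrite length_seq. replace m with (1 + (m - 1))%nat at 1 by lia. rewrite rsum_split.
      cbn [rsum]. rewrite Rplus_0_l. f_equal. apply rsum_ext. intros.
      replace (1 + i)%nat with (S i) by lia. cbn [Qm]. f_equal. f_equal. lia. }
    rewrite HQ. apply minL.
    + apply seq_NoDup.
    + rewrite length_seq; lia.
    + rewrite length_seq; lia.
    + auto.
    + auto.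
    + intros i Hi. apply in_seq. pose proof (Hmap i Hi). lia.
    + intros j Hj. apply in_seq in Hj. apply Hsurj. lia.
  - set (fQ := fun i => if Nat.leb i (n - m) then O else (i - (n - m))%nat).
    assert (HfQ : surj_onto n m fQ).
    { split.
      - intros i Hi. unfold fQ. destruct (Nat.leb i (n - m)) eqn:E. lia. apply Nat.leb_gt in E. lia.
      - intros j Hj. destruct j.
        + exists O. split. lia. unfold fQ. replace (Nat.leb 0 (n - m)) with true by (symmetry; apply Nat.leb_le; lia). auto.
        + exists (n - m + S j)%nat. split. lia. unfold fQ.
          replace (Nat.leb (n - m + S j) (n - m)) with false by (symmetry; apply Nat.leb_gt; lia). lia. }
    exists fQ. split; auto. rewrite !entropy_phi. f_equal. apply rsum_ext. intros r Hr. f_equal.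
    unfold pushforward. destruct r.
    + cbn [Qm]. transitivity (rsum n (fun i => if Nat.leb i (n - m) then p i else 0)).
      * apply rsum_ext. intros i Hi. unfold fQ. destruct (Nat.leb i (n - m)) eqn:E. auto.
        apply Nat.leb_gt in E. replace (Nat.eqb (i - (n - m)) 0) with false; auto. symmetry; apply Nat.eqb_neq; lia.
      * replace n with ((n - m + 1) + (m - 1))%nat at 1 by lia. rewrite rsum_split.
        rewrite (rsum_ext (n - m + 1) _ p). rewrite (rsum_ext (m - 1) _ (fun _ => 0)). rewrite rsum_const. ring.
        intros. replace (Nat.leb (n - m + 1 + i) (n - m)) with false; auto. symmetry; apply Nat.leb_gt; lia.
        intros. replace (Nat.leb i (n - m)) with true; auto. symmetry; apply Nat.leb_le; lia.
    + cbn [Qm]. transitivity (rsum n (fun i => if Nat.eqb i (n - m + S r) then p i else 0)).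
      * apply rsum_ext. intros i Hi. unfold fQ. destruct (Nat.leb i (n - m)) eqn:E.
        -- apply Nat.leb_le in E. replace (Nat.eqb i (n - m + S r)) with false by (symmetry; apply Nat.eqb_neq; lia). auto.
        -- apply Nat.leb_gt in E. destruct (Nat.eqb (i - (n - m)) (S r)) eqn:E1; destruct (Nat.eqb i (n - m + S r)) eqn:E2; auto.
           apply Nat.eqb_eq in E1. apply Nat.eqb_neq in E2. lia.
           apply Nat.eqb_neq in E1. apply Nat.eqb_eq in E2. lia.
      * rewrite rsum_pick'. replace (Nat.ltb (n - m + S r) n) with true; auto. symmetry; apply Nat.ltb_lt; lia.
Qed.
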